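(* Consider the sub-$\ell^\infty$ structure on $\mathbb{R}^3$ defined by $Y_1=\partial_x+\partial_y+y^2\partial_z$, $Y_2=\partial_x-\partial_y+y^2\partial_z$. If an extremal pair $(\lambda,\gamma)$ restricted to an open interval $I$ is an abnormal arc and $\gamma$ is not constant on $I$, then $u_1=u_2$ a.e. on $I$ and $\gamma(I)$ is contained in a line $\{y=0,\ z=z_0\}$ for some $z_0\in\mathbb{R}$. Conversely, every admissible trajectory contained in such a line admits an extremal lift whose restriction to its whole domain is an abnormal arc.
   Context: Sub-$\ell^\infty$ structure defined by smooth vector fields $X_1,\dots,X_k$ on a manifold $M$ (here $X_1=Y_1$, $X_2=Y_2$): an admissible trajectory is an absolutely continuous curve $\gamma:[0,T]\to M$ together with a measurable control $u=(u_1,\dots,u_k):[0,T]\to\mathbb{R}^k$ with $|u_i(t)|\le1$ for all $i$ and a.e. $t$, such that $\dot\gamma(t)=\sum_i u_i(t)X_i(\gamma(t))$ for a.e. $t$. An extremal pair is a pair $(\lambda,\gamma)$ where $\gamma$ is admissible with control $u$ and $\lambda:[0,T]\to T^*M$ is absolutely continuous with $\lambda(t)\in T^*_{\gamma(t)}M\setminus\{0\}$, such that, with $\mathcal H(\lambda,p,u)=\sum_i u_i\langle\lambda,X_i(p)\rangle$, in canonical coordinates $\dot\lambda=-\partial_p\mathcal H(\lambda,\gamma,u)$, $\dot\gamma=\partial_\lambda\mathcal H(\lambda,\gamma,u)$ a.e., and there is a constant $\lambda_0\ge0$ with $\sum_iu_i(t)\langle\lambda(t),X_i(\gamma(t))\rangle=\sum_i|\langle\lambda(t),X_i(\gamma(t))\rangle|=\lambda_0$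 for a.e. $t$; $\gamma$ is then an extremal trajectory and $\lambda$ an extremal lift. The switching functions are $\varphi_j(t)=\langle\lambda(t),X_j(\gamma(t))\rangle$. The restriction of an extremal pair to an open interval $I$ is an abnormal arc if $\varphi_j\equiv0$ on $I$ for all $j=1,\dots,k$. *)

(* Defs.v *)
From Stdlib Require Import Reals Lra.
Open Scope R_scope.

(** Points of R^3 and covectors (identified with R^3 via the standard basis). *)
Definition pt : Type := (R * R * R)%type.
Definition px (p : pt) : R := fst (fst p).
Definition py (p : pt) : R := snd (fst p).
Definition pz (p : pt) : R := snd p.
Definition mkpt (x y z : R) : pt := (x, y, z).
Definition setx (p : pt) (s : R) : pt := mkpt s (py p) (pz p).
Definition sety (p : pt) (s : R) : pt := mkpt (px p) s (pz p).
Definition setz (p : pt) (s : R) : pt := mkpt (px p) (py p) s.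

Definition Y1 (p : pt) : pt := mkpt 1 1 (py p ^ 2).
Definition Y2 (p : pt) : pt := mkpt 1 (-1) (py p ^ 2).

Definition pairing (l v : pt) : R := px l * px v + py l * py v + pz l * pz v.

Definition Ham (l p : pt) (u1 u2 : R) : R :=
  u1 * pairing l (Y1 p) + u2 * pairing l (Y2 p).

(** Interval covers and Lebesgue outer measure. [cover A s]: A is covered by
    countably many open intervals of total length <= s  (i.e. m*(A) <= s up to
    the choice of cover). *)
Definition cover (A : R -> Prop) (s : R) : Prop :=
  exists a b : nat -> R,
    (forall n, a n <= b n) /\
    (forall t, A t -> exists n, a n < t < b n) /\
    (forall n, sum_f_R0 (fun k => b k - a k) n <= s).

Definition null (N : R -> Prop) : Prop := forall eps, 0 < eps -> cover N eps.

Definition ae_on (S : R -> Prop) (P : R -> Prop) : Prop :=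
  exists N, null N /\ forall t, S t -> ~ N t -> P t.

(** Lebesgue measurable sets (Caratheodory criterion for Lebesgue outer measure):
    m*(A) >= m*(A /\ E) + m*(A \ E) for all A. *)
Definition meas_set (E : R -> Prop) : Prop :=
  forall (A : R -> Prop) (s : R),
    (forall eps, 0 < eps -> cover A (s + eps)) ->
    forall eps, 0 < eps ->
      exists s1 s2, cover (fun t => A t /\ E t) s1 /\
                    cover (fun t => A t /\ ~ E t) s2 /\ s1 + s2 <= s + eps.

Definition measurable_on (T : R) (f : R -> R) : Prop :=
  forall c, meas_set (fun t => 0 <= t <= T /\ f t < c).

Fixpoint fsum (g : nat -> R) (n : nat) : R :=
  match n with O => 0 | S m => fsum g m + g m end.

Definition abs_cont (f : R -> R) (a b : R) : Prop :=
  forall eps, 0 < eps -> exists delta, 0 < delta /\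
    forall (n : nat) (x y : nat -> R),
      (forall k, (k < n)%nat -> a <= x k /\ x k <= y k /\ y k <= b) ->
      (forall k, (S k < n)%nat -> y k <= x (S k)) ->
      fsum (fun k => y k - x k) n < delta ->
      fsum (fun k => Rabs (f (y k) - f (x k))) n < eps.

Definition abs_cont_pt (g : R -> pt) (a b : R) : Prop :=
  abs_cont (fun t => px (g t)) a b /\ abs_cont (fun t => py (g t)) a b /\
  abs_cont (fun t => pz (g t)) a b.

Definition admissible (T : R) (gamma : R -> pt) (u1 u2 : R -> R) : Prop :=
  0 <= T /\
  abs_cont_pt gamma 0 T /\
  measurable_on T u1 /\ measurable_on T u2 /\
  ae_on (fun t => 0 <= t <= T) (fun t => Rabs (u1 t) <= 1 /\ Rabs (u2 t) <= 1) /\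
  ae_on (fun t => 0 < t < T) (fun t =>
    derivable_pt_lim (fun s => px (gamma s)) t
      (u1 t * px (Y1 (gamma t)) + u2 t * px (Y2 (gamma t))) /\
    derivable_pt_lim (fun s => py (gamma s)) t
      (u1 t * py (Y1 (gamma t)) + u2 t * py (Y2 (gamma t))) /\
    derivable_pt_lim (fun s => pz (gamma s)) t
      (u1 t * pz (Y1 (gamma t)) + u2 t * pz (Y2 (gamma t)))).

Definition phi1 (gamma lam : R -> pt) (t : R) : R := pairing (lam t) (Y1 (gamma t)).
Definition phi2 (gamma lam : R -> pt) (t : R) : R := pairing (lam t) (Y2 (gamma t)).

(** Hamiltonian system at time t:
    dlambda/dt = - d_p H,  dgamma/dt = d_lambda H  (coordinatewise). *)
Definition hamilton_at (gamma lam : R -> pt) (u1 u2 : R -> R) (t : R) : Prop :=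
  (exists l, derivable_pt_lim (fun s => Ham (lam t) (setx (gamma t) s) (u1 t) (u2 t)) (px (gamma t)) l
          /\ derivable_pt_lim (fun s => px (lam s)) t (- l)) /\
  (exists l, derivable_pt_lim (fun s => Ham (lam t) (sety (gamma t) s) (u1 t) (u2 t)) (py (gamma t)) l
          /\ derivable_pt_lim (fun s => py (lam s)) t (- l)) /\
  (exists l, derivable_pt_lim (fun s => Ham (lam t) (setz (gamma t) s) (u1 t) (u2 t)) (pz (gamma t)) l
          /\ derivable_pt_lim (fun s => pz (lam s)) t (- l)) /\
  (exists l, derivable_pt_lim (fun s => Ham (setx (lam t) s) (gamma t) (u1 t) (u2 t)) (px (lam t)) l
          /\ derivable_pt_lim (fun s => px (gamma s)) t l) /\
  (exists l, derivable_pt_lim (fun s => Ham (sety (lam t) s) (gamma t) (u1 t) (u2 t)) (py (lam t)) l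
          /\ derivable_pt_lim (fun s => py (gamma s)) t l) /\
  (exists l, derivable_pt_lim (fun s => Ham (setz (lam t) s) (gamma t) (u1 t) (u2 t)) (pz (lam t)) l
          /\ derivable_pt_lim (fun s => pz (gamma s)) t l).

Definition extremal_pair (T : R) (gamma : R -> pt) (u1 u2 : R -> R) (lam : R -> pt) : Prop :=
  admissible T gamma u1 u2 /\
  abs_cont_pt lam 0 T /\
  (forall t, 0 <= t <= T -> lam t <> mkpt 0 0 0) /\
  ae_on (fun t => 0 < t < T) (hamilton_at gamma lam u1 u2) /\
  exists lam0, 0 <= lam0 /\
    ae_on (fun t => 0 <= t <= T) (fun t =>
      u1 t * phi1 gamma lam t + u2 t * phi2 gamma lam t = lam0 /\
      Rabs (phi1 gamma lam t) + Rabs (phi2 gamma lam t) = lam0).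

Definition abnormal_on (gamma lam : R -> pt) (a b : R) : Prop :=
  forall t, a < t < b -> phi1 gamma lam t = 0 /\ phi2 gamma lam t = 0.

(* Main.v *)
Require Import Defs.
From Stdlib Require Import Reals.
Open Scope R_scope.
From Stdlib Require Import Lra Lia Classical.
From Coquelicot Require Import Coquelicot.
Open Scope R_scope.

Lemma fsum_ext g h n : (forall k, (k < n)%nat -> g k = h k) -> fsum g n = fsum h n.
Proof. induction n; simpl; intros H; auto. rewrite IHn by (intros; apply H; lia). rewrite H by lia. auto. Qed.

Lemma fsum_nonneg g n : (forall k, 0 <= g k) -> 0 <= fsum g n.
Proof. intros H; induction n; simpl; [lra|]. specialize (H n); lra. Qed.

Lemma fsum_ge_elem g m M : (forall k, 0 <= g k) -> (m < M)%nat -> g m <= fsum g M.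
Proof. intros H; induction M; intros Hm; [lia|]. simpl.
  destruct (Nat.eq_dec m M) as [->|Hne].
  - pose proof (fsum_nonneg g M H); lra.
  - pose proof (IHM ltac:(lia)); specialize (H M); lra. Qed.

Lemma fsum_mono_n g M0 M : (forall k, 0 <= g k) -> (M0 <= M)%nat -> fsum g M0 <= fsum g M.
Proof. intros H; induction 1; [lra|]. simpl. specialize (H m); lra. Qed.

Lemma fsum_minus g h n : fsum (fun k => g k - h k) n = fsum g n - fsum h n.
Proof. induction n; simpl; [lra|]. rewrite IHn; lra. Qed.

Lemma fsum_le g h n : (forall k, (k < n)%nat -> g k <= h k) -> fsum g n <= fsum h n.
Proof. induction n; simpl; intros H; [lra|]. pose proof (IHn ltac:(intros; apply H; lia)). pose proof (H n ltac:(lia)); lra. Qed.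

Lemma fsum_sum_f g n : fsum g (S n) = sum_f_R0 g n.
Proof. induction n; simpl in *; [lra|]. rewrite <- IHn. reflexivity. Qed.

Definition term (a b : nat -> R) n s := Rmin (b n) s - Rmin (a n) s.
Definition LL a b M s := fsum (fun n => term a b n s) M.

Lemma term_nonneg a b n s : a n <= b n -> 0 <= term a b n s.
Proof. unfold term, Rmin; intros; repeat destruct Rle_dec; lra. Qed.
Lemma term_mono a b n s s' : a n <= b n -> s <= s' -> 0 <= term a b n s' - term a b n s.
Proof. unfold term, Rmin; intros; repeat destruct Rle_dec; lra. Qed.
Lemma term_le a b n s : a n <= b n -> term a b n s <= b n - a n.
Proof. unfold term, Rmin; intros; repeat destruct Rle_dec; lra. Qed.
Lemma term_in a b n s s' : a n < s -> s <= s' -> s' < b n -> term a b n s' - term a b n s = s' - s.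
Proof. unfold term, Rmin; intros; repeat destruct Rle_dec; lra. Qed.

Lemma LL_diff a b M s s' : LL a b M s' - LL a b M s = fsum (fun n => term a b n s' - term a b n s) M.
Proof. unfold LL; rewrite fsum_minus; auto. Qed.

Lemma LL_mono a b M s s' : (forall n, a n <= b n) -> s <= s' -> LL a b M s <= LL a b M s'.
Proof. intros Hab Hs. pose proof (fsum_nonneg (fun n => term a b n s' - term a b n s) M
   (fun n => term_mono a b n s s' (Hab n) Hs)). rewrite <- LL_diff in H. lra. Qed.

Lemma LL_diff_mono a b M0 M s s' : (forall n, a n <= b n) -> s <= s' -> (M0 <= M)%nat ->
  LL a b M0 s' - LL a b M0 s <= LL a b M s' - LL a b M s.
Proof. intros. rewrite !LL_diff. apply fsum_mono_n; auto. intros; apply term_mono; auto. Qed.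

Lemma LL_diff_elem a b M m s s' : (forall n, a n <= b n) -> s <= s' -> (m < M)%nat ->
  term a b m s' - term a b m s <= LL a b M s' - LL a b M s.
Proof. intros. rewrite LL_diff. apply (fsum_ge_elem (fun n => term a b n s' - term a b n s)); auto.
  intros; apply term_mono; auto. Qed.

Definition Pext (f : R -> R) (a b : nat -> R) (c eps s : R) : Prop :=
  exists n (x y : nat -> R) M,
    (forall k, (k < n)%nat -> c <= x k /\ x k <= y k /\ y k <= s) /\
    (forall k, (S k < n)%nat -> y k <= x (S k)) /\
    fsum (fun k => y k - x k) n <= LL a b M s - LL a b M c /\
    Rabs (f s - f c) <= eps * (s - c) + fsum (fun k => Rabs (f (y k) - f (x k))) n.

Lemma Pext_init f a b c eps : Pext f a b c eps c.
Proof. exists O, (fun _ => 0), (fun _ => 0), O. simpl. split; [intros; lia|]. split; [intros; lia|].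
  unfold LL; simpl. split; [lra|]. rewrite Rminus_diag, Rabs_R0. lra. Qed.

Lemma Pext_good f a b c eps s s' : (forall n, a n <= b n) -> c <= s -> s <= s' ->
  Rabs (f s' - f s) <= eps * (s' - s) -> Pext f a b c eps s -> Pext f a b c eps s'.
Proof. intros Hab Hc Hs Hf [n [x [y [M [H1 [H2 [H3 H4]]]]]]].
  exists n, x, y, M. repeat split.
  - apply H1; auto.
  - apply H1; auto.
  - specialize (H1 k H); lra.
  - auto.
  - pose proof (LL_mono a b M s s' Hab Hs); lra.
  - replace (f s' - f c) with ((f s - f c) + (f s' - f s)) by ring.
    pose proof (Rabs_triang (f s - f c) (f s' - f s)). lra. Qed.

Lemma Pext_bad f a b c eps s s' m : 0 <= eps -> (forall n, a n <= b n) -> c <= s -> a m < s -> s <= s' -> s' < b m ->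
  Pext f a b c eps s -> Pext f a b c eps s'.
Proof. intros Heps Hab Hc Ha Hs Hb [n [x [y [M [H1 [H2 [H3 H4]]]]]]].
  exists (S n), (fun k => if Nat.ltb k n then x k else s), (fun k => if Nat.ltb k n then y k else s'), (Nat.max M (S m)).
  repeat split.
  - destruct (Nat.ltb_spec k n); [apply H1; auto|lra].
  - destruct (Nat.ltb_spec k n); [apply H1; auto|lra].
  - destruct (Nat.ltb_spec k n); [specialize (H1 k H0); lra|lra].
  - intros k Hk. destruct (Nat.ltb_spec k n); destruct (Nat.ltb_spec (S k) n); try lia.
    + apply H2; lia.
    + specialize (H1 k H); lra.
  - simpl. rewrite (fsum_ext _ (fun k => y k - x k) n).
    2:{ intros k Hk. destruct (Nat.ltb_spec k n); [auto|lia]. }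
    destruct (Nat.ltb_spec n n); [lia|].
    pose proof (LL_diff_mono a b M (Nat.max M (S m)) c s Hab Hc ltac:(lia)).
    pose proof (LL_diff_elem a b (Nat.max M (S m)) m s s' Hab Hs ltac:(lia)).
    rewrite (term_in a b m s s') in H5 by auto. lra.
  - simpl. rewrite (fsum_ext _ (fun k => Rabs (f (y k) - f (x k))) n).
    2:{ intros k Hk. destruct (Nat.ltb_spec k n); [auto|lia]. }
    destruct (Nat.ltb_spec n n); [lia|].
    replace (f s' - f c) with ((f s - f c) + (f s' - f s)) by ring.
    pose proof (Rabs_triang (f s - f c) (f s' - f s)).
    pose proof (Rmult_le_compat_l eps (s - c) (s' - c) Heps ltac:(lra)). lra. Qed.


Lemma deriv0_bound f t eps : 0 < eps -> derivable_pt_lim f t 0 ->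
  exists r, 0 < r /\ forall s, Rabs (s - t) < r -> Rabs (f s - f t) <= eps * Rabs (s - t).
Proof. intros He Hd. destruct (Hd eps He) as [dl Hdl]. exists dl. split; [apply cond_pos|].
  intros s Hs. destruct (Req_dec s t) as [->|Hne].
  - rewrite !Rminus_diag, Rabs_R0. lra.
  - specialize (Hdl (s - t) ltac:(lra) Hs). replace (t + (s - t)) with s in Hdl by ring.
    rewrite Rminus_0_r in Hdl.
    replace (f s - f t) with ((f s - f t) / (s - t) * (s - t)) by (field; lra).
    rewrite Rabs_mult. apply Rmult_le_compat_r; [apply Rabs_pos|lra]. Qed.

Lemma const_ae_le f T a b N : abs_cont f 0 T -> 0 <= a -> b <= T -> null N ->
  (forall t, a < t < b -> ~ N t -> derivable_pt_lim f t 0) ->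
  forall c d, a < c -> c <= d -> d < b -> f c = f d.
Proof.
  intros Hac Ha Hb HN Hder c d Hc Hcd Hd.
  assert (Hmain : forall eps, 0 < eps -> Rabs (f d - f c) <= eps * (d - c) + eps).
  { intros eps Heps.
    destruct (Hac eps Heps) as [dl [Hdl Hdlp]].
    destruct (HN (dl/2) ltac:(lra)) as [aa [bb [Hab [Hcov Hsum]]]].
    set (S0 := fun s => c <= s <= d /\ Pext f aa bb c eps s).
    assert (HS : exists x, S0 x) by (exists c; split; [lra|apply Pext_init]).
    assert (HB : bound S0) by (exists d; intros x [Hx _]; lra).
    destruct (completeness S0 HB HS) as [m [Hub Hlub]].
    assert (Hcm : c <= m) by (apply Hub; split; [lra|apply Pext_init]).
    assert (Hmd : m <= d) by (apply Hlub; intros x [Hx _]; lra).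
    assert (Hext : exists r, 0 < r /\ forall s s', m - r < s <= m -> m <= s' < m + r -> c <= s ->
        Pext f aa bb c eps s -> Pext f aa bb c eps s').
    { destruct (classic (N m)) as [HNm|HNm].
      - destruct (Hcov m HNm) as [k Hk].
        exists (Rmin (m - aa k) (bb k - m)). split.
        + apply Rmin_glb_lt; lra.
        + intros s s' H1 H2 H3 HP. pose proof (Rmin_l (m - aa k) (bb k - m)).
          pose proof (Rmin_r (m - aa k) (bb k - m)).
          apply (Pext_bad f aa bb c eps s s' k); auto; lra.
      - destruct (deriv0_bound f m eps Heps (Hder m ltac:(lra) HNm)) as [r [Hr Hrb]].
        exists r. split; auto. intros s s' H1 H2 H3 HP.
        apply (Pext_good f aa bb c eps s s'); auto; try lra.
        pose proof (Hrb s ltac:(rewrite Rabs_left1; lra)) as Q1.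
        pose proof (Hrb s' ltac:(rewrite Rabs_right; lra)) as Q2.
        rewrite (Rabs_left1 (s - m)) in Q1 by lra. rewrite (Rabs_right (s' - m)) in Q2 by lra.
        replace (f s' - f s) with ((f s' - f m) + - (f s - f m)) by ring.
        pose proof (Rabs_triang (f s' - f m) (- (f s - f m))) as Q3. rewrite Rabs_Ropp in Q3.
        lra. }
    destruct Hext as [r [Hr Hext]].
    assert (Hs : exists s, S0 s /\ m - r < s).
    { apply NNPP. intro Hn. assert (m <= m - r); [|lra].
      apply Hlub. intros x Hx. apply Rnot_lt_le. intro Hlt. apply Hn. exists x; auto. }
    destruct Hs as [s [[Hs1 Hs2] Hs3]].
    assert (Hsm : s <= m) by (apply Hub; split; auto).
    assert (HPd : Pext f aa bb c eps (Rmin (m + r/2) d)).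
    { apply (Hext s); try lra; auto. split.
      - apply Rmin_glb; lra.
      - pose proof (Rmin_l (m + r/2) d); lra. }
    assert (Hmd' : m = d).
    { assert (Rmin (m + r/2) d <= m).
      { apply Hub. split; auto. split; [apply Rmin_glb; lra| apply Rmin_r]. }
      unfold Rmin in H; destruct Rle_dec; lra. }
    assert (HPd' : Pext f aa bb c eps d).
    { replace d with (Rmin (m + r/2) d); auto. unfold Rmin; destruct Rle_dec; lra. }
    destruct HPd' as [n [x [y [M [H1 [H2 [H3 H4]]]]]]].
    assert (HL0 : 0 <= LL aa bb M c) by (apply fsum_nonneg; intros; apply term_nonneg; auto).
    assert (HL1 : LL aa bb M d <= fsum (fun k => bb k - aa k) M) by (apply fsum_le; intros; apply term_le; auto).
    assert (HL2 : fsum (fun k => bb k - aa k) M <= dl / 2).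
    { destruct M; [simpl; lra|]. rewrite fsum_sum_f. apply Hsum. }
    assert (Hf : fsum (fun k => Rabs (f (y k) - f (x k))) n < eps).
    { apply Hdlp; auto; [|lra]. intros k Hk. specialize (H1 k Hk). lra. }
    lra. }
  destruct (Req_dec (f d) (f c)) as [E|E]; auto.
  assert (Hp : 0 < Rabs (f d - f c)) by (apply Rabs_pos_lt; lra).
  set (e := Rabs (f d - f c) / (2 * (d - c + 1))).
  assert (He : 0 < e) by (unfold e; apply Rdiv_lt_0_compat; lra).
  specialize (Hmain e He).
  assert (e * (d - c) + e = Rabs (f d - f c) / 2) by (unfold e; field; lra).
  lra.
Qed.

Lemma const_ae f T a b N : abs_cont f 0 T -> 0 <= a -> b <= T -> null N ->
  (forall t, a < t < b -> ~ N t -> derivable_pt_lim f t 0) ->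
  forall c d, a < c < b -> a < d < b -> f c = f d.
Proof. intros. destruct (Rle_dec c d).
  - eapply const_ae_le; eauto; lra.
  - symmetry; eapply const_ae_le; eauto; lra. Qed.

Ltac dH := apply is_derive_Reals; unfold Ham, pairing, Y1, Y2, setx, sety, setz, mkpt, px, py, pz; simpl;
  auto_derive; [auto|ring].

Lemma dH_x L p u v: derivable_pt_lim (fun s => Ham L (setx p s) u v) (px p) 0.
Proof. dH. Qed.
Lemma dH_y L p u v: derivable_pt_lim (fun s => Ham L (sety p s) u v) (py p) ((u+v)*(pz L*(2*py p))).
Proof. dH. Qed.
Lemma dH_z L p u v: derivable_pt_lim (fun s => Ham L (setz p s) u v) (pz p) 0.
Proof. dH. Qed.
Lemma dH_lx L p u v: derivable_pt_lim (fun s => Ham (setx L s) p u v) (px L) (u+v).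
Proof. dH. Qed.
Lemma dH_ly L p u v: derivable_pt_lim (fun s => Ham (sety L s) p u v) (py L) (u-v).
Proof. dH. Qed.
Lemma dH_lz L p u v: derivable_pt_lim (fun s => Ham (setz L s) p u v) (pz L) ((u+v) * py p ^ 2).
Proof. dH. Qed.

Lemma ham_explicit gamma lam u1 u2 t : hamilton_at gamma lam u1 u2 t ->
  derivable_pt_lim (fun s => px (lam s)) t 0 /\
  derivable_pt_lim (fun s => py (lam s)) t (-((u1 t + u2 t) * (pz (lam t) * (2 * py (gamma t))))) /\
  derivable_pt_lim (fun s => pz (lam s)) t 0 /\
  derivable_pt_lim (fun s => px (gamma s)) t (u1 t + u2 t) /\
  derivable_pt_lim (fun s => py (gamma s)) t (u1 t - u2 t) /\
  derivable_pt_lim (fun s => pz (gamma s)) t ((u1 t + u2 t) * py (gamma t) ^ 2).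
Proof.
  intros [[l1 [A1 B1]] [[l2 [A2 B2]] [[l3 [A3 B3]] [[l4 [A4 B4]] [[l5 [A5 B5]] [l6 [A6 B6]]]]]]].
  rewrite (uniqueness_limite _ _ _ _ A1 (dH_x _ _ _ _)) in B1.
  rewrite (uniqueness_limite _ _ _ _ A2 (dH_y _ _ _ _)) in B2.
  rewrite (uniqueness_limite _ _ _ _ A3 (dH_z _ _ _ _)) in B3.
  rewrite (uniqueness_limite _ _ _ _ A4 (dH_lx _ _ _ _)) in B4.
  rewrite (uniqueness_limite _ _ _ _ A5 (dH_ly _ _ _ _)) in B5.
  rewrite (uniqueness_limite _ _ _ _ A6 (dH_lz _ _ _ _)) in B6.
  rewrite Ropp_0 in B1, B3. repeat split; auto.
Qed.

Lemma deriv_const_int f C a b t l : (forall s, a < s < b -> f s = C) -> a < t < b ->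
  derivable_pt_lim f t l -> l = 0.
Proof. intros Hc Ht Hd. destruct (Req_dec l 0) as [|Hl]; auto. exfalso.
  destruct (Hd (Rabs l) (Rabs_pos_lt _ Hl)) as [dl Hdl].
  pose proof (cond_pos dl).
  set (h := Rmin (dl/2) ((b - t)/2)).
  assert (Hh0 : 0 < h) by (apply Rmin_glb_lt; lra).
  assert (Hh1 : h <= dl/2) by apply Rmin_l.
  assert (Hh2 : h <= (b-t)/2) by apply Rmin_r.
  specialize (Hdl h ltac:(lra) ltac:(rewrite Rabs_right; lra)).
  rewrite (Hc (t+h)) in Hdl by lra. rewrite (Hc t) in Hdl by lra.
  replace ((C - C) / h - l) with (- l) in Hdl by (field; lra).
  rewrite Rabs_Ropp in Hdl. lra. Qed.

Lemma fsum_zero n : fsum (fun _ => 0) n = 0.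
Proof. induction n; simpl; [auto|rewrite IHn; ring]. Qed.

Lemma abs_cont_const K a b : abs_cont (fun _ => K) a b.
Proof. intros eps He. exists 1. split; [lra|]. intros n x y _ _ _.
  rewrite (fsum_ext _ (fun _ => 0)). rewrite fsum_zero; lra.
  intros; rewrite Rminus_diag, Rabs_R0; auto. Qed.

Lemma null_empty : null (fun _ => False).
Proof. intros eps He. exists (fun _ => 0), (fun _ => 0). split; [intros; lra|]. split; [intros t []|].
  intros n. rewrite <- fsum_sum_f. rewrite (fsum_ext _ (fun _ => 0)); [rewrite fsum_zero; lra|].
  intros; ring. Qed.

Definition lam1 : R -> pt := fun _ => mkpt 0 0 1.

Lemma phi1_z gamma t : py (gamma t) = 0 -> phi1 gamma lam1 t = 0.
Proof. intros H. unfold phi1, lam1, pairing, Y1. rewrite H. unfold px, py, pz, mkpt; simpl; ring. Qed.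
Lemma phi2_z gamma t : py (gamma t) = 0 -> phi2 gamma lam1 t = 0.
Proof. intros H. unfold phi2, lam1, pairing, Y2. rewrite H. unfold px, py, pz, mkpt; simpl; ring. Qed.

Lemma part2 : forall (T : R) (gamma : R -> pt) (u1 u2 : R -> R) (z0 : R),
     admissible T gamma u1 u2 ->
     (forall t, 0 <= t <= T -> py (gamma t) = 0 /\ pz (gamma t) = z0) ->
     exists (v1 v2 : R -> R) (lam : R -> pt),
       extremal_pair T gamma v1 v2 lam /\ abnormal_on gamma lam 0 T.
Proof.
  intros T gamma u1 u2 z0 Hadm Hline.
  exists u1, u2, lam1. split.
  2:{ intros t Ht. split; [apply phi1_z|apply phi2_z]; apply Hline; lra. }
  split; [auto|]. split.
  { split; [|split]; [exact (abs_cont_const 0 0 T)|exact (abs_cont_const 0 0 T)|exact (abs_cont_const 1 0 T)]. }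
  split.
  { intros t _ H. unfold lam1, mkpt in H. injection H; lra. }
  split.
  { destruct Hadm as [_ [_ [_ [_ [_ [N [HN Hd]]]]]]].
    exists N. split; auto. intros t Ht HNt. destruct (Hd t Ht HNt) as [D1 [D2 D3]].
    assert (Hy : py (gamma t) = 0) by (apply Hline; lra).
    unfold hamilton_at. split; [|split; [|split; [|split; [|split]]]].
    - exists 0. split; [apply dH_x|]. rewrite Ropp_0. apply derivable_pt_lim_const.
    - exists ((u1 t + u2 t) * (pz (lam1 t) * (2 * py (gamma t)))). split; [apply dH_y|].
      rewrite Hy. replace (- ((u1 t + u2 t) * (pz (lam1 t) * (2 * 0)))) with 0 by ring.
      apply derivable_pt_lim_const.
    - exists 0. split; [apply dH_z|]. rewrite Ropp_0. apply derivable_pt_lim_const.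
    - exists (u1 t + u2 t). split; [apply dH_lx|].
      replace (u1 t + u2 t) with (u1 t * px (Y1 (gamma t)) + u2 t * px (Y2 (gamma t))); auto.
      change (px (Y1 (gamma t))) with 1; change (px (Y2 (gamma t))) with 1; ring.
    - exists (u1 t - u2 t). split; [apply dH_ly|].
      replace (u1 t - u2 t) with (u1 t * py (Y1 (gamma t)) + u2 t * py (Y2 (gamma t))); auto.
      change (py (Y1 (gamma t))) with 1; change (py (Y2 (gamma t))) with (-1); ring.
    - exists ((u1 t + u2 t) * py (gamma t) ^ 2). split; [apply dH_lz|].
      replace ((u1 t + u2 t) * py (gamma t) ^ 2) with (u1 t * pz (Y1 (gamma t)) + u2 t * pz (Y2 (gamma t))); auto.
      change (pz (Y1 (gamma t))) with (py (gamma t) ^ 2); change (pz (Y2 (gamma t))) with (py (gamma t) ^ 2); ring. }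
  exists 0. split; [lra|]. exists (fun _ => False). split; [apply null_empty|].
  intros t Ht _. rewrite phi1_z, phi2_z by (apply Hline; auto).
  rewrite Rabs_R0. split; ring.
Qed.

Lemma part1 : forall (T : R) (gamma : R -> pt) (u1 u2 : R -> R) (lam : R -> pt) (a b : R),
     extremal_pair T gamma u1 u2 lam ->
     0 <= a -> a < b -> b <= T ->
     abnormal_on gamma lam a b ->
     ~ (exists c : pt, forall t, a < t < b -> gamma t = c) ->
     ae_on (fun t => a < t < b) (fun t => u1 t = u2 t) /\
     exists z0 : R, forall t, a < t < b -> py (gamma t) = 0 /\ pz (gamma t) = z0.
Proof.
  intros T gamma u1 u2 lam a b Hext Ha Hab Hb Habn Hnc.
  destruct Hext as [Hadm [[Hlx [Hly Hlz]] [Hne [[Nh [HNh Hh]] _]]]].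
  destruct Hadm as [_ [[Hgx [Hgy Hgz]] _]].
  assert (H6 : forall t, a < t < b -> ~ Nh t -> _) by (intros t Ht HN; exact (ham_explicit _ _ _ _ t (Hh t ltac:(lra) HN))).
  assert (Hab0 : forall t, a < t < b -> py (lam t) = 0 /\ px (lam t) + pz (lam t) * py (gamma t) ^ 2 = 0).
  { intros t Ht. destruct (Habn t Ht) as [P1 P2]. unfold phi1, phi2, pairing, Y1, Y2 in P1, P2.
    change (px (mkpt 1 1 (py (gamma t) ^ 2))) with 1 in P1.
    change (py (mkpt 1 1 (py (gamma t) ^ 2))) with 1 in P1.
    change (pz (mkpt 1 1 (py (gamma t) ^ 2))) with (py (gamma t) ^ 2) in P1.
    change (px (mkpt 1 (-1) (py (gamma t) ^ 2))) with 1 in P2.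
    change (py (mkpt 1 (-1) (py (gamma t) ^ 2))) with (-1) in P2.
    change (pz (mkpt 1 (-1) (py (gamma t) ^ 2))) with (py (gamma t) ^ 2) in P2.
    split; lra. }
  set (tm := (a + b) / 2).
  assert (Htm : a < tm < b) by (unfold tm; lra).
  assert (HX : forall t, a < t < b -> px (lam t) = px (lam tm)).
  { intros t Ht. apply (const_ae _ T a b Nh Hlx Ha Hb HNh); auto.
    intros s Hs HN. apply (H6 s Hs HN). }
  assert (HZ : forall t, a < t < b -> pz (lam t) = pz (lam tm)).
  { intros t Ht. apply (const_ae _ T a b Nh Hlz Ha Hb HNh); auto.
    intros s Hs HN. apply (H6 s Hs HN). }
  set (X := px (lam tm)) in *. set (Z := pz (lam tm)) in *.
  assert (HZ0 : Z <> 0).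
  { intro HZ0. apply (Hne tm ltac:(lra)).
    destruct (Hab0 tm Htm) as [E1 E2]. fold Z in E2. rewrite HZ0 in E2.
    assert (E3 : px (lam tm) = 0) by lra.
    unfold Z in HZ0. revert E1 E3 HZ0. unfold px, py, pz, mkpt.
    destruct (lam tm) as [[p1 p2] p3]; simpl. intros -> -> ->. reflexivity. }
  assert (HY2 : forall t, a < t < b -> py (gamma t) * py (gamma t) = - X / Z).
  { intros t Ht. destruct (Hab0 t Ht) as [_ E]. rewrite HX, HZ in E by auto. fold X Z in E.
    field_simplify_eq; auto. simpl in E. lra. }
  assert (Hv : forall t, a < t < b -> ~ Nh t -> u1 t - u2 t = 0).
  { intros t Ht HN. destruct (H6 t Ht HN) as [_ [_ [_ [_ [Dy _]]]]].
    destruct (Req_dec (py (gamma t)) 0) as [E|E].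
    - assert (Hc : forall s, a < s < b -> py (gamma s) = 0).
      { intros s Hs. pose proof (HY2 s Hs). pose proof (HY2 t Ht). rewrite E in H0.
        nra. }
      exact (deriv_const_int _ 0 a b t _ Hc Ht Dy).
    - pose proof (derivable_pt_lim_mult _ _ _ _ _ Dy Dy) as Dm.
      pose proof (deriv_const_int _ (- X / Z) a b t _ (fun s Hs => HY2 s Hs) Ht Dm).
      unfold mult_fct in H; simpl in H. nra. }
  assert (HY : forall t, a < t < b -> py (gamma t) = py (gamma tm)).
  { intros t Ht. apply (const_ae _ T a b Nh Hgy Ha Hb HNh); auto.
    intros s Hs HN. rewrite <- (Hv s Hs HN). apply (H6 s Hs HN). }
  split.
  { exists Nh. split; auto. intros t Ht HN. pose proof (Hv t Ht HN). lra. }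
  set (C := py (gamma tm)) in *.
  assert (Hly0 : forall t, a < t < b -> ~ Nh t -> (u1 t + u2 t) * (Z * (2 * C)) = 0).
  { intros t Ht HN. destruct (H6 t Ht HN) as [_ [Dly _]].
    rewrite HZ, HY in Dly by auto. fold Z C in Dly.
    pose proof (deriv_const_int _ 0 a b t _ (fun s Hs => proj1 (Hab0 s Hs)) Ht Dly). lra. }
  destruct (Req_dec C 0) as [HC|HC].
  - assert (Hzc : forall t, a < t < b -> pz (gamma t) = pz (gamma tm)).
    { intros t Ht. apply (const_ae _ T a b Nh Hgz Ha Hb HNh); auto.
      intros s Hs HN. destruct (H6 s Hs HN) as [_ [_ [_ [_ [_ Dz]]]]].
      rewrite HY, HC in Dz by auto. replace 0 with ((u1 s + u2 s) * 0 ^ 2) by ring. auto. }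
    exists (pz (gamma tm)). intros t Ht. split; auto. rewrite HY; auto.
  - exfalso. apply Hnc. exists (gamma tm). intros t Ht.
    assert (Hs0 : forall s, a < s < b -> ~ Nh s -> u1 s + u2 s = 0).
    { intros s Hs HN. pose proof (Hly0 s Hs HN).
      destruct (Rmult_integral _ _ H) as [|H']; auto.
      destruct (Rmult_integral _ _ H') as [|H'']; [contradiction|]. exfalso; lra. }
    assert (Hxc : px (gamma t) = px (gamma tm)).
    { apply (const_ae _ T a b Nh Hgx Ha Hb HNh); auto.
      intros s Hs HN. rewrite <- (Hs0 s Hs HN). apply (H6 s Hs HN). }
    assert (Hzc : pz (gamma t) = pz (gamma tm)).
    { apply (const_ae _ T a b Nh Hgz Ha Hb HNh); auto.
      intros s Hs HN. destruct (H6 s Hs HN) as [_ [_ [_ [_ [_ Dz]]]]].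
      rewrite (Hs0 s Hs HN) in Dz. replace 0 with (0 * py (gamma s) ^ 2) by ring. auto. }
    pose proof (HY t Ht) as Hyc. fold C in Hyc.
    revert Hxc Hyc Hzc. unfold C, px, py, pz.
    destruct (gamma t) as [[p1 p2] p3]; destruct (gamma tm) as [[q1 q2] q3]; simpl.
    intros -> -> ->. reflexivity.
Qed.

Theorem mainTheorem12 :
  (forall (T : R) (gamma : R -> pt) (u1 u2 : R -> R) (lam : R -> pt) (a b : R),
     extremal_pair T gamma u1 u2 lam ->
     0 <= a -> a < b -> b <= T ->
     abnormal_on gamma lam a b ->
     ~ (exists c : pt, forall t, a < t < b -> gamma t = c) ->
     ae_on (fun t => a < t < b) (fun t => u1 t = u2 t) /\
     exists z0 : R, forall t, a < t < b -> py (gamma t) = 0 /\ pz (gamma t) = z0)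
  /\
  (forall (T : R) (gamma : R -> pt) (u1 u2 : R -> R) (z0 : R),
     admissible T gamma u1 u2 ->
     (forall t, 0 <= t <= T -> py (gamma t) = 0 /\ pz (gamma t) = z0) ->
     exists (v1 v2 : R -> R) (lam : R -> pt),
       extremal_pair T gamma v1 v2 lam /\ abnormal_on gamma lam 0 T).
Proof. split; [exact part1|exact part2]. Qed.
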